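(* Suppose $\mathcal{G}_k\equiv\mathcal{G}_*$ for all $k$, for a fixed digraph $\mathcal{G}_*$ on $\mathcal{V}=\{1,\dots,n\}$. (i) For every algorithm in $\mathcal{A}_{\rm ave}$, if global asymptotic consensus is achieved then $\mathcal{G}_*$ is quasi-strongly connected. (ii) For the algorithm in $\mathcal{A}_{\rm max}$, global finite-time consensus is achieved if and only if $\mathcal{G}_*$ is strongly connected.
   Context: Network of nodes $\mathcal{V}=\{1,\dots,n\}$, $n\ge 3$, discrete time, states $x_i(k)\in\mathbb{R}$. At each time $k$ a digraph $\mathcal{G}_k=(\mathcal{V},\mathcal{E}_k)$ is given; $j$ is a neighbor of $i$ at time $k$ if $(j,i)\in\mathcal{E}_k$, every node is always its own neighbor; $\mathcal{N}_i(k)$ is the neighbor set. The algorithm is $$x_i(k+1)=\eta_k x_i(k)+\alpha_k\min_{j\in\mathcal{N}_i(k)}x_j(k)+(1-\eta_k-\alpha_k)\max_{j\in\mathcal{N}_i(k)}x_j(k),$$ with node-independent parameters $\eta_k\ge0,\alpha_k\ge0,\eta_k+\alpha_k\le1$. $\mathcal{A}_{\rm ave}$: $\eta_k\in(0,1]$, $\alpha_k\in[0,1-\eta_k]$ for all $k$. $\mathcal{A}_{\rm max}$: $\eta_k=\alpha_k=0$ for all $k$ (i.e. $x_i(k+1)=\max_{j\in\mathcal{N}_i(k)}x_j(k)$). The iteration starts at time $k_0$ with $x(k_0)=x^0$. Asymptotic consensus: there is $z_*$ with $x_i(k)\to z_*$ for all $i$; finite-time consensus: there are $z_*$ and an integer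 $T_*$ with $x_i(T_* )=z_*$ for all $i$; ''global'' means for all $k_0\ge0$ and all $x^0\in\mathbb{R}^n$. A node $j$ is reachable from $i$ if there is a directed path from $i$ to $j$ (each node is reachable from itself). A digraph is strongly connected if every node is reachable from every other node, and quasi-strongly connected if it has a center, i.e. a node from which every node is reachable. *)

(* Defs.v *)
From Stdlib Require Import Reals List Relations Arith.
Import ListNotations.
Open Scope R_scope.

(* Nodes are 0, ..., n-1.  A digraph is given by a boolean edge relation
   E : nat -> nat -> bool, with E j i = true meaning (j,i) is an edge,
   i.e. j is a neighbor of i.  Only entries with both indices < n matter. *)

Definition nbrs (n : nat) (E : nat -> nat -> bool) (i : nat) : list nat :=
  filter (fun j => orb (Nat.eqb j i) (E j i)) (seq 0 n).

(* min / max of x_j over the neighbors j of i (i itself is a neighbor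
   when i < n, so seeding the fold with x i does not change the value). *)
Definition minN (n : nat) (E : nat -> nat -> bool) (x : nat -> R) (i : nat) : R :=
  fold_right (fun j acc => Rmin (x j) acc) (x i) (nbrs n E i).
Definition maxN (n : nat) (E : nat -> nat -> bool) (x : nat -> R) (i : nat) : R :=
  fold_right (fun j acc => Rmax (x j) acc) (x i) (nbrs n E i).

Definition step (n : nat) (E : nat -> nat -> bool) (eta alpha : nat -> R)
  (k : nat) (x : nat -> R) : nat -> R :=
  fun i => eta k * x i + alpha k * minN n E x i
           + (1 - eta k - alpha k) * maxN n E x i.

(* traj n E eta alpha k0 x0 t = state x(k0 + t) when the iteration
   starts at time k0 with x(k0) = x0. *)
Fixpoint traj (n : nat) (E : nat -> nat -> bool) (eta alpha : nat -> R)
  (k0 : nat) (x0 : nat -> R) (t : nat) : nat -> R :=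
  match t with
  | O => x0
  | S t' => step n E eta alpha (k0 + t') (traj n E eta alpha k0 x0 t')
  end.

Definition in_A_ave (eta alpha : nat -> R) : Prop :=
  forall k, 0 < eta k <= 1 /\ 0 <= alpha k <= 1 - eta k.
Definition eta_max : nat -> R := fun _ => 0.
Definition alpha_max : nat -> R := fun _ => 0.

Definition global_asymptotic_consensus (n : nat) (E : nat -> nat -> bool)
  (eta alpha : nat -> R) : Prop :=
  forall (k0 : nat) (x0 : nat -> R),
    exists z : R, forall i, (i < n)%nat ->
      Un_cv (fun t => traj n E eta alpha k0 x0 t i) z.

Definition global_finite_time_consensus (n : nat) (E : nat -> nat -> bool)
  (eta alpha : nat -> R) : Prop :=
  forall (k0 : nat) (x0 : nat -> R),
    exists (z : R) (t : nat), forall i, (i < n)%nat ->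
      traj n E eta alpha k0 x0 t i = z.

Definition edge (n : nat) (E : nat -> nat -> bool) (a b : nat) : Prop :=
  (a < n)%nat /\ (b < n)%nat /\ E a b = true.
Definition reachable (n : nat) (E : nat -> nat -> bool) (i j : nat) : Prop :=
  clos_refl_trans nat (edge n E) i j.

Definition strongly_connected (n : nat) (E : nat -> nat -> bool) : Prop :=
  forall i j, (i < n)%nat -> (j < n)%nat -> reachable n E i j.
Definition quasi_strongly_connected (n : nat) (E : nat -> nat -> bool) : Prop :=
  exists c, (c < n)%nat /\ forall j, (j < n)%nat -> reachable n E c j.

(* Main.v *)
Require Import Defs.
From Stdlib Require Import Reals.
From Stdlib Require Import Reals List Relations Arith Lia Lra Classical ClassicalEpsilon.
Import ListNotations.
Open Scope R_scope.

Lemma in_nbrs n E i j : In j (nbrs n E i) -> (j < n)%nat /\ (j = i \/ E j i = true).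
Proof.
  unfold nbrs. intros H. apply filter_In in H. destruct H as [H1 H2].
  apply in_seq in H1. split; [lia|].
  apply Bool.orb_true_iff in H2. destruct H2 as [H|H]; [left; apply Nat.eqb_eq; auto | right; auto].
Qed.

Lemma nbrs_in n E i j : (j < n)%nat -> (j = i \/ E j i = true) -> In j (nbrs n E i).
Proof.
  intros Hj H. unfold nbrs. apply filter_In. split.
  - apply in_seq. lia.
  - apply Bool.orb_true_iff. destruct H as [H|H]; [left; apply Nat.eqb_eq; auto | right; auto].
Qed.

Lemma fold_min_const (x : nat -> R) v i l : x i = v -> (forall j, In j l -> x j = v) ->
  fold_right (fun j acc => Rmin (x j) acc) (x i) l = v.
Proof.
  induction l; simpl; intros H1 H2; auto.
  rewrite IHl, H2 by auto. unfold Rmin; destruct Rle_dec; auto.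
Qed.

Lemma fold_max_const (x : nat -> R) v i l : x i = v -> (forall j, In j l -> x j = v) ->
  fold_right (fun j acc => Rmax (x j) acc) (x i) l = v.
Proof.
  induction l; simpl; intros H1 H2; auto.
  rewrite IHl, H2 by auto. unfold Rmax; destruct Rle_dec; auto.
Qed.

Lemma fold_max_le (x : nat -> R) M i l : x i <= M -> (forall j, In j l -> x j <= M) ->
  fold_right (fun j acc => Rmax (x j) acc) (x i) l <= M.
Proof.
  induction l; simpl; intros H1 H2; auto.
  apply Rmax_lub; auto.
Qed.

Lemma fold_max_seed (x : nat -> R) i l : x i <= fold_right (fun j acc => Rmax (x j) acc) (x i) l.
Proof.
  induction l; simpl; [lra|]. eapply Rle_trans; [exact IHl| apply Rmax_r].
Qed.

Lemma fold_max_in (x : nat -> R) i l j : In j l -> x j <= fold_right (fun j acc => Rmax (x j) acc) (x i) l.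
Proof.
  induction l; simpl; intros H; [contradiction|]. destruct H as [H|H].
  - subst; apply Rmax_l.
  - eapply Rle_trans; [apply IHl; auto| apply Rmax_r].
Qed.

Lemma reach_lt n E c a : reachable n E c a -> (a < n)%nat -> (c < n)%nat.
Proof.
  intros H. induction H; intros; auto. destruct H as [? [? ?]]; auto.
Qed.

Lemma traj_const n E eta alpha k0 x0 a v : (a < n)%nat ->
  (forall j, reachable n E j a -> x0 j = v) ->
  forall t j, reachable n E j a -> traj n E eta alpha k0 x0 t j = v.
Proof.
  intros Ha Hx. induction t; simpl; intros j Hj; auto.
  assert (Hjn : (j < n)%nat) by (eapply reach_lt; eauto).
  assert (Hnb : forall k, In k (nbrs n E j) -> traj n E eta alpha k0 x0 t k = v).
  { intros k Hk. apply in_nbrs in Hk. destruct Hk as [Hk [Hk2|Hk2]].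
    - subst; auto.
    - apply IHt. apply rt_trans with j; [apply rt_step; repeat split; auto | exact Hj]. }
  unfold step, Defs.minN, Defs.maxN.
  rewrite (fold_min_const _ v), (fold_max_const _ v); auto. rewrite IHt by auto. ring.
Qed.

Lemma step_max n E k x i : step n E eta_max alpha_max k x i = Defs.maxN n E x i.
Proof. unfold step, eta_max, alpha_max. ring. Qed.

Section MaxAlg.
Variables (n : nat) (E : nat -> nat -> bool) (k0 : nat) (x0 : nat -> R).
Let f t i := traj n E eta_max alpha_max k0 x0 t i.

Lemma mono1 t i : (i < n)%nat -> f t i <= f (S t) i.
Proof.
  intros Hi. unfold f; simpl. rewrite step_max. unfold Defs.maxN. apply fold_max_seed.
Qed.

Lemma mono t d i : (i < n)%nat -> f t i <= f (t + d)%nat i.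
Proof.
  intros Hi. induction d. rewrite Nat.add_0_r; lra.
  eapply Rle_trans; [exact IHd|]. rewrite Nat.add_succ_r. apply mono1; auto.
Qed.

Lemma edge_step t j i : edge n E j i -> f t j <= f (S t) i.
Proof.
  intros [Hj [Hi He]]. unfold f; simpl. rewrite step_max. unfold Defs.maxN.
  apply fold_max_in. apply nbrs_in; auto.
Qed.

Lemma reach_delay j i : reachable n E j i -> exists d, forall t, f t j <= f (t + d)%nat i.
Proof.
  intros H. induction H.
  - exists 1%nat. intros t. rewrite Nat.add_1_r. apply edge_step; auto.
  - exists 0%nat. intros t. rewrite Nat.add_0_r. lra.
  - destruct IHclos_refl_trans1 as [d1 H1]. destruct IHclos_refl_trans2 as [d2 H2].
    exists (d1 + d2)%nat. intros t. eapply Rle_trans; [apply H1|].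
    rewrite Nat.add_assoc. apply H2.
Qed.

Lemma bounded M : (forall j, (j < n)%nat -> x0 j <= M) ->
  forall t i, (i < n)%nat -> f t i <= M.
Proof.
  intros HM. induction t; intros i Hi; unfold f in *; simpl; auto.
  rewrite step_max. unfold Defs.maxN. apply fold_max_le; auto.
  intros j Hj. apply in_nbrs in Hj. apply IHt; tauto.
Qed.
End MaxAlg.

Lemma argmax (x : nat -> R) n : (0 < n)%nat -> exists j, (j < n)%nat /\ forall i, (i < n)%nat -> x i <= x j.
Proof.
  induction n; intros H; [lia|]. destruct n.
  - exists 0%nat. split; [lia|]. intros i Hi. replace i with 0%nat by lia. lra.
  - destruct IHn as [j [Hj Hm]]; [lia|].
    destruct (Rle_dec (x j) (x (S n))).
    + exists (S n). split; [lia|]. intros i Hi. destruct (Nat.eq_dec i (S n)); [subst; lra|].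
      eapply Rle_trans; [apply Hm; lia| auto].
    + exists j. split; [lia|]. intros i Hi. destruct (Nat.eq_dec i (S n)); [subst; lra|].
      apply Hm; lia.
Qed.

Lemma uniform (f : nat -> nat -> R) M n :
  (forall i, (i < n)%nat -> exists d, forall t, (d <= t)%nat -> M <= f t i) ->
  forall m, (m <= n)%nat -> exists D, forall i, (i < m)%nat -> forall t, (D <= t)%nat -> M <= f t i.
Proof.
  intros H. induction m; intros Hm.
  - exists 0%nat. intros; lia.
  - destruct IHm as [D HD]; [lia|]. destruct (H m) as [d Hd]; [lia|].
    exists (Nat.max D d). intros i Hi t Ht. destruct (Nat.eq_dec i m).
    + subst. apply Hd. lia.
    + apply HD; lia.
Qed.

Lemma un_cv_const (u : nat -> R) v z : (forall t, u t = v) -> Un_cv u z -> z = v.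
Proof.
  intros H Hc. apply (UL_sequence u); auto.
  intros eps He. exists 0%nat. intros t _. rewrite H. unfold R_dist.
  replace (v - v) with 0 by ring. rewrite Rabs_R0. lra.
Qed.

Lemma pairs_qsc n E : (0 < n)%nat ->
  (forall a b, (a < n)%nat -> (b < n)%nat -> exists c, (c < n)%nat /\ reachable n E c a /\ reachable n E c b) ->
  quasi_strongly_connected n E.
Proof.
  intros Hn H.
  assert (K : forall m, (m < n)%nat -> exists c, (c < n)%nat /\ forall j, (j <= m)%nat -> reachable n E c j).
  { induction m; intros Hm.
    - destruct (H 0%nat 0%nat) as [c [Hc [H1 _]]]; auto. exists c. split; auto.
      intros j Hj. replace j with 0%nat by lia. auto.
    - destruct IHm as [c [Hc Hall]]; [lia|].
      destruct (H c (S m)) as [c' [Hc' [Hc1 Hc2]]]; auto.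
      exists c'. split; auto. intros j Hj. destruct (Nat.eq_dec j (S m)); [subst; auto|].
      eapply rt_trans; [exact Hc1| apply Hall; lia]. }
  destruct (K (n - 1)%nat) as [c [Hc Hall]]; [lia|].
  exists c. split; auto. intros j Hj. apply Hall. lia.
Qed.

Theorem theorem3 (n : nat) (E : nat -> nat -> bool) (Hn : (3 <= n)%nat) :
  (forall eta alpha : nat -> R, in_A_ave eta alpha ->
     global_asymptotic_consensus n E eta alpha ->
     quasi_strongly_connected n E)
  /\
  (global_finite_time_consensus n E eta_max alpha_max <->
     strongly_connected n E).
Proof.
  split; [|split].
  - intros eta alpha _ Hcons.
    apply NNPP; intro Hq.
    assert (Hab : exists a b, (a < n)%nat /\ (b < n)%nat /\
              forall c, reachable n E c a -> reachable n E c b -> False).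
    { apply NNPP; intro Hnot. apply Hq. apply pairs_qsc; [lia|].
      intros a b Ha Hb. apply NNPP; intro Hc. apply Hnot. exists a, b.
      split; auto. split; auto. intros c Hca Hcb. apply Hc. exists c.
      split; [eapply reach_lt; eauto| auto]. }
    destruct Hab as [a [b [Ha [Hb Hab]]]].
    set (x0 := fun k => if excluded_middle_informative (reachable n E k a) then 0 else 1).
    destruct (Hcons 0%nat x0) as [z Hz].
    assert (Z0 : z = 0).
    { apply (un_cv_const (fun t => traj n E eta alpha 0 x0 t a)); [| apply Hz; auto].
      intros t. apply (traj_const n E eta alpha 0 x0 a 0); auto; [|apply rt_refl].
      intros j Hj. unfold x0. destruct excluded_middle_informative; auto; contradiction. }
    assert (Z1 : z = 1).
    { apply (un_cv_const (fun t => traj n E eta alpha 0 x0 t b)); [| apply Hz; auto].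
      intros t. apply (traj_const n E eta alpha 0 x0 b 1); auto; [|apply rt_refl].
      intros j Hj. unfold x0. destruct excluded_middle_informative as [r|]; auto.
      exfalso; eapply Hab; eauto. }
    lra.
  - intros Hc i j Hi Hj. apply NNPP; intro Hr.
    set (x0 := fun k => if excluded_middle_informative (reachable n E k j) then 0 else 1).
    destruct (Hc 0%nat x0) as [z [t Ht]].
    assert (A : traj n E eta_max alpha_max 0 x0 t j = 0).
    { apply (traj_const n E eta_max alpha_max 0 x0 j 0); auto; [|apply rt_refl].
      intros k Hk. unfold x0. destruct excluded_middle_informative; auto; contradiction. }
    assert (B : 1 <= traj n E eta_max alpha_max 0 x0 t i).
    { assert (x0 i = 1) by (unfold x0; destruct excluded_middle_informative; [contradiction|auto]).
      pose proof (mono n E 0 x0 0 t i Hi) as Hm. simpl in Hm. lra. }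
    rewrite Ht in A, B by auto. lra.
  - intros Hs k0 x0.
    destruct (argmax x0 n) as [js [Hjs Hmax]]; [lia|].
    set (M := x0 js).
    assert (HD : exists D, forall i, (i < n)%nat -> forall t, (D <= t)%nat ->
              M <= traj n E eta_max alpha_max k0 x0 t i).
    { apply (uniform _ M n) with (m := n); [|lia].
      intros i Hi. destruct (reach_delay n E k0 x0 js i (Hs js i Hjs Hi)) as [d Hd].
      exists d. intros t Ht. specialize (Hd 0%nat). simpl in Hd.
      replace t with (d + (t - d))%nat by lia.
      eapply Rle_trans; [exact Hd| apply mono; auto]. }
    destruct HD as [D HD]. exists M, D. intros i Hi.
    apply Rle_antisym.
    + apply (bounded n E k0 x0 M); auto.
    + apply HD; auto.
Qed.
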